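(* Let $(x,y,C)\in Q(r)$ with $r\ge5$. Then $d:J\times J\to\mathbb R$, $d(j_1,j_2):=1-y_{j_1,j_2}$, is a semimetric on $J$ (i.e. $d\ge0$, $d(j,j)=0$, $d$ is symmetric, and $d(j_1,j_3)\le d(j_1,j_2)+d(j_2,j_3)$ for all $j_1,j_2,j_3\in J$).
   Context: Fix a finite set $J$ of jobs, a partial order $\prec$ on $J$, and $c,S,m\in\mathbb N$. Sherali–Adams lift: for a polytope $K=\{x\in\mathbb R^{V}:Ax\ge b\}$ on a finite index set $V$ and $r\ge0$, $SA_r(K)$ is the set of vectors $y$ indexed by subsets of $V$ of size at most $r+1$ with $y_\emptyset=1$ and, for every row $\ell$ and all $I,J'\subseteq V$ with $|I|+|J'|\le r$, $\sum_{H\subseteq J'}(-1)^{|H|}\big(\sum_{v\in V}A_{\ell,v}y_{I\cup H\cup\{v\}}-b_\ell y_{I\cup H}\big)\ge0$. Scheduling LP: let $V=J\times[m]\times\{0,\dots,S-1\}$ and let $K\subseteq\mathbb R^V$ be the set of $x$ with $\sum_{i\in[m]}\sum_{s}x_{j,i,s}=1$ for all $j\in J$, $\sum_{j\in J}x_{j,i,s}\le c$ for all $i,s$, and $0\le x_{j,i,s}\le1$. For $x\in SA_r(K)$ write $x_{j,i,s}=x_{\{(j,i,s)\}}$ and $x_{(j_1,i_1,s_1),(j_2,i_2,s_2)}=x_{\{(j_1,i_1,s_1),(j_2,i_2,s_2)\}}$. $Q(r)$ is the set of triples $(x,y,C)$ with $x\in SA_r(K)$, $y\in\mathbb R^{J\times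 J}$, $C\in\mathbb R^J$ satisfying $y_{j_1,j_2}=\sum_{s=0}^{S-1}\sum_{i\in[m]}x_{(j_1,i,s),(j_2,i,s)}$ for all $j_1,j_2\in J$, $C_{j_2}\ge C_{j_1}+(1-y_{j_1,j_2})$ for all $j_1\prec j_2$, and $C_j\ge0$ for all $j$. *)

(* Defs.v *)
From mathcomp Require Import all_boot all_order all_algebra.
Set Implicit Arguments. Unset Strict Implicit. Unset Printing Implicit Defensive.
Import Order.TTheory GRing.Theory Num.Theory.
Local Open Scope ring_scope.

(* Index set V = J x [m] x {0,...,S-1}; a variable is ((j, i), s). *)
Definition Vty (J : finType) (m S : nat) : finType := ((J * 'I_m) * 'I_S)%type.

(* Rows of the system A x >= b describing the scheduling polytope K.
   Equalities are written as two inequalities, "<=" constraints are negated. *)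
Inductive row (J : finType) (m S : nat) : Type :=
  | EqLo of J                       (*  sum_{i,s} x_{j,i,s} >= 1 *)
  | EqHi of J                       (* -sum_{i,s} x_{j,i,s} >= -1 *)
  | Cap of 'I_m & 'I_S              (* -sum_j x_{j,i,s} >= -c *)
  | Nonneg of Vty J m S             (*  x_v >= 0 *)
  | LeOne of Vty J m S.             (* -x_v >= -1 *)

Section Rows.
Variables (R : realFieldType) (J : finType) (c m S : nat).

Definition rowA (l : row J m S) (v : Vty J m S) : R :=
  match l with
  | EqLo j => (v.1.1 == j)%:R
  | EqHi j => - (v.1.1 == j)%:R
  | Cap i s => - ((v.1.2 == i) && (v.2 == s))%:R
  | Nonneg w => (v == w)%:R
  | LeOne w => - (v == w)%:R
  end.

Definition rowb (l : row J m S) : R :=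
  match l with
  | EqLo _ => 1
  | EqHi _ => -1
  | Cap _ _ => - c%:R
  | Nonneg _ => 0
  | LeOne _ => -1
  end.

(* A vector indexed by subsets of V of size at
   most r+1 is modelled as a function on all subsets of V; only its values on
   subsets of size <= r+1 are ever constrained/used. *)
Definition in_SA (r : nat) (x : {set Vty J m S} -> R) : Prop :=
  x set0 = 1 /\
  forall (l : row J m S) (I J' : {set Vty J m S}),
    (#|I| + #|J'| <= r)%N ->
    0 <= \sum_(H in powerset J')
            (-1) ^+ #|H| *
            ((\sum_(v : Vty J m S) rowA l v * x (I :|: H :|: [set v]))
             - rowb l * x (I :|: H)).

Definition in_Q (prec : rel J) (r : nat) (x : {set Vty J m S} -> R)
    (y : J -> J -> R) (C : J -> R) : Prop :=
  [/\ in_SA r x,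
      (forall j1 j2 : J,
          y j1 j2 = \sum_(s < S) \sum_(i < m)
                      x [set ((j1, i), s); ((j2, i), s)]),
      (forall j1 j2 : J, prec j1 j2 -> C j2 >= C j1 + (1 - y j1 j2)) &
      (forall j : J, 0 <= C j)].

End Rows.

Definition semimetric (R : realFieldType) (T : Type) (d : T -> T -> R) : Prop :=
  [/\ forall a b, 0 <= d a b,
      forall a, d a a = 0,
      forall a b, d a b = d b a &
      forall a b e, d a e <= d a b + d b e].

(* Main.v *)
Require Import Defs.
From mathcomp Require Import all_boot all_order all_algebra.
From mathcomp Require Import ring lra.
Import Order.TTheory GRing.Theory Num.Theory.
Local Open Scope ring_scope.

Section Aux.
Variables (R : realFieldType) (J : finType) (c m S r : nat).
Variable x : {set Vty J m S} -> R.
Hypothesis HSA : in_SA c r x.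

Lemma sum_neq (w : Vty J m S) (f : Vty J m S -> R) :
  \sum_v - (v == w)%:R * f v = - f w.
Proof.
rewrite (bigD1 w) //= eqxx mulNr mul1r big1 ?addr0 // => v /negbTE ->.
by rewrite mulNr mul0r oppr0.
Qed.

Lemma le1 (I : {set Vty J m S}) w : (#|I| <= r)%N -> x (I :|: [set w]) <= x I.
Proof.
move=> hI; have := HSA.2 (LeOne w) I set0; rewrite cards0 addn0 => /(_ hI).
rewrite powerset0 big_set1 cards0 expr0 mul1r /= sum_neq !setU0.
by rewrite mulN1r opprK => h; rewrite -subr_ge0; by rewrite addrC.
Qed.

Lemma le2 (I : {set Vty J m S}) a w : (#|I| + 1 <= r)%N ->
  x (I :|: [set w]) + x (I :|: [set a]) <= x I + x (I :|: [set a] :|: [set w]).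
Proof.
move=> hI; have := HSA.2 (LeOne w) I [set a]; rewrite cards1 => /(_ hI).
rewrite powerset1 big_setU1 /=; last by rewrite in_set1; apply/eqP => /setP /(_ a); rewrite !inE eqxx.
rewrite big_set1 cards0 cards1 expr0 expr1 !mul1r /= !sum_neq !setU0.
rewrite !mulN1r !opprK => h; rewrite -subr_ge0.
by apply: le_trans h _; rewrite le_eqVlt; apply/orP; left; apply/eqP; ring.
Qed.
End Aux.

Lemma sumj (R : realFieldType) (J : finType) (c m S r : nat)
  (x : {set Vty J m S} -> R) : in_SA c r x -> forall j : J,
  \sum_(s < S) \sum_(i < m) x [set ((j, i), s)] = 1.
Proof.
move=> HSA j.
have E : \sum_(v : Vty J m S) (v.1.1 == j)%:R * x [set v] = 1.
  have h1 := HSA.2 (EqLo m S j) set0 set0.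
  have h2 := HSA.2 (EqHi m S j) set0 set0.
  rewrite cards0 in h1 h2; have {h1}h1 := h1 isT; have {h2}h2 := h2 isT.
  rewrite powerset0 big_set1 cards0 expr0 mul1r /= !set0U HSA.1 in h1.
  rewrite powerset0 big_set1 cards0 expr0 mul1r /= !set0U HSA.1 in h2.
  move: h1 h2.
  under eq_bigr => v _ do rewrite !set0U.
  under [X in _ -> 0 <= X - _ -> _]eq_bigr => v _ do rewrite !set0U mulNr.
  move=> h1 h2.
  rewrite sumrN in h2.
  move: h1 h2; set t := \sum_v _; move=> h1 h2; lra.
rewrite -{}E.
transitivity (\sum_(j' : J) \sum_(i < m) \sum_(s < S) (j' == j)%:R * x [set ((j', i), s)]).
  rewrite [RHS](bigD1 j) //= [X in _ + X]big1 ?addr0; last first.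
    move=> j' /negbTE hj; apply: big1 => i _; apply: big1 => s _.
    by rewrite hj mul0r.
  rewrite exchange_big; apply: eq_bigr => s _; apply: eq_bigr => i _.
  by rewrite eqxx mul1r.
rewrite pair_bigA /=.
transitivity (\sum_(p : J * 'I_m) \sum_(s < S) (p.1 == j)%:R * x [set (p, s)]).
  by apply: eq_bigr => -[].
by rewrite pair_bigA; apply: eq_bigr => -[].
Qed.

Lemma setE2 (T : finType) (a b : T) : [set a; b] = [set a] :|: [set b].
Proof. by []. Qed.

Theorem mainTheorem8 (R : realFieldType) (J : finType) (prec : rel J)
    (c S m r : nat)
    (prec_irr : irreflexive prec) (prec_trans : transitive prec)
    (x : {set Vty J m S} -> R) (y : J -> J -> R) (C : J -> R) :
  (5 <= r)%N ->
  in_Q c prec r x y C ->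
  semimetric (fun j1 j2 : J => 1 - y j1 j2).
Proof.
move=> hr [HSA Hy _ _].
have r1 : (1 <= r)%N by apply: leq_trans hr.
have r2 : (2 <= r)%N by apply: leq_trans hr.
have Hs := @sumj _ _ _ _ _ _ _ HSA.
split.
- move=> a b; rewrite subr_ge0 Hy -(Hs a).
  apply: ler_sum => s _; apply: ler_sum => i _.
  by apply: (@le1 _ _ _ _ _ _ _ HSA); rewrite cards1.
- by move=> a; rewrite Hy; under eq_bigr => s _ do under eq_bigr => i _ do rewrite setUid; rewrite Hs subrr.
- move=> a b; rewrite !Hy; congr (1 - _); apply: eq_bigr => s _; apply: eq_bigr => i _.
  by congr x; apply/setP => z; rewrite !inE orbC.
- move=> a b e; rewrite !Hy.
  suff : \sum_(s < S) \sum_(i < m) x [set (a, i, s); (b, i, s)] +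
         \sum_(s < S) \sum_(i < m) x [set (b, i, s); (e, i, s)] <=
         \sum_(s < S) \sum_(i < m) x [set (b, i, s)] +
         \sum_(s < S) \sum_(i < m) x [set (a, i, s); (e, i, s)].
    by rewrite Hs; lra.
  rewrite -!big_split /=; apply: ler_sum => s _; rewrite -!big_split /=.
  apply: ler_sum => i _.
  set A := (a, i, s); set U := (b, i, s); set E := (e, i, s).
  have h1 := @le2 _ _ _ _ _ _ _ HSA [set U] A E.
  rewrite cards1 in h1; have {h1}h1 := h1 r2.
  have h2 := @le1 _ _ _ _ _ _ _ HSA [set A; E] U.
  have c2 : (#|[set A; E]| <= r)%N by rewrite cards2; case: (A != E).
  have {h2}h2 := h2 c2.
  have -> : [set A; U] = [set U] :|: [set A] by apply/setP => z; rewrite !inE orbC.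
  have e3 : [set U] :|: [set A] :|: [set E] = [set A; E] :|: [set U].
    apply/setP=> z; rewrite !inE.
    by case: (z == U); case: (z == A); case: (z == E).
  rewrite e3 in h1; lra.
Qed.
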